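(* Let $\mathcal T$ be a locally finite partial tessellation of ${\mathbb X}$, let $T_1,T_2$ be tiles of $\mathcal T$, and suppose $S=T_1\cap T_2$ has codimension 1. Let $H$ be the hyperplane generated by $S$. Then: (1) $H$ is an essential hyperplane of both $T_1$ and $T_2$; (2) $T_1$ and $T_2$ are contained in different closed half-spaces bounded by $H$; (3) $S^r\cap T=\emptyset$ for every tile $T$ different from $T_1$ and $T_2$; (4) $S$ is a side of $\mathcal T$.
   Context: ${\mathbb X}$ is $\mathbb R^n$, the unit sphere $\mathbb S^n$, or hyperbolic $n$-space. A subspace is a complete totally geodesic submanifold, a hyperplane one of codimension 1; closed half-spaces are closures of the two components of the complement of a hyperplane; the hyperplane generated by a set is the smallest subspace containing it (when that has codimension 1). A polyhedron is a nonempty intersection of a family of closed half-spaces whose boundary hyperplanes form a locally finite family; its codimension is that of the subspace it generates and $S^r$ is its interior in that subspace; it is thick if it has nonempty interior in ${\mathbb X}$. For a thick polyhedron $P$, a closed half-space $Z$ is essential if $P\subseteq Z$ and $P\cap\partial Z$ has nonempty interior in $\partial Z$; then $\partial Z$ is an essential hyperplane of $P$. A partial tessellation is a set of thick polyhedra (tiles) with pairwise disjoint interiors; locally finite means every compact set meets only finitely many tiles. A cell is a nonempty intersection $C$ of tiles such that for every tile $T$ either $C\subseteq T$ or $C^r\cap T=\emptyset$; a side is a cell of codimension 1. *)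

(* Defs.v *)
From HB Require Import structures.
From mathcomp Require Import all_boot all_order all_algebra.
From mathcomp Require Import all_classical all_reals all_analysis.
Set Implicit Arguments. Unset Strict Implicit. Unset Printing Implicit Defensive.
Import Order.TTheory GRing.Theory Num.Theory.
Import numFieldNormedType.Exports.
Local Open Scope classical_set_scope.
Local Open Scope ring_scope.

(* All are realised inside R^(n+1) (row vectors
   'rV[R]_(n.+1)), with the induced (Euclidean) topology, which is the
   manifold topology of X:
   - Euclidean n-space: the affine slice {x | x_n = 1};
   - the unit sphere S^n: {x | x_0^2 + ... + x_n^2 = 1};
   - hyperbolic n-space: the hyperboloid model
       {x | x_0^2 + ... + x_(n-1)^2 - x_n^2 = -1, x_n > 0}.
   In each model the (complete totally geodesic) subspaces are exactly the
   nonempty sets X /\ W with W a linear subspace of R^(n+1), of dimension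
   dim W - 1. *)
Inductive geometry := Euclidean | Spherical | Hyperbolic.

Section Geometry.
Variables (R : realType) (g : geometry) (n : nat).

Local Notation point := 'rV[R]_(n.+1).

Definition Xset : set point :=
  match g with
  | Euclidean => [set x | x 0 ord_max = 1]
  | Spherical => [set x | \sum_(i < n.+1) x 0 i ^+ 2 = 1]
  | Hyperbolic => [set x | \sum_(i < n.+1 | i != ord_max) x 0 i ^+ 2
                           - x 0 ord_max ^+ 2 = -1 /\ 0 < x 0 ord_max]
  end.

Definition subspace_codim (Y : set point) (c : nat) : Prop :=
  exists W : {vspace point},
    (\dim W + c = n.+1)%N /\ Y = Xset `&` [set x | x \in W] /\ Y !=set0.

Definition is_subspace (Y : set point) : Prop := exists c, subspace_codim Y c.

Definition is_hyperplane (H : set point) : Prop := subspace_codim H 1.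

Definition gen_subspace (A Y : set point) : Prop :=
  is_subspace Y /\ A `<=` Y /\
  forall Y', is_subspace Y' -> A `<=` Y' -> Y `<=` Y'.

Definition codim (A : set point) (c : nat) : Prop :=
  exists Y, gen_subspace A Y /\ subspace_codim Y c.

Definition lfun (a x : point) : R := \sum_(i < n.+1) a 0 i * x 0 i.

(* Z is a closed half-space bounded by the hyperplane H, i.e. the closure of
   one of the two components of X \ H *)
Definition halfspace_of (H Z : set point) : Prop :=
  is_hyperplane H /\
  exists a : point, a != 0 /\
    H = Xset `&` [set x | lfun a x = 0] /\
    Z = Xset `&` [set x | 0 <= lfun a x].

Definition is_halfspace (Z : set point) : Prop := exists H, halfspace_of H Z.

Definition rel_interior (Y A : set point) (p : point) : Prop :=
  A p /\ nbhs p (fun y => Y y -> A y).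

(* A^r : the interior of A in the subspace it generates *)
Definition relint (A : set point) : set point :=
  [set p | exists Y, gen_subspace A Y /\ rel_interior Y A p].

Definition locally_finite_family (F : set (set point)) : Prop :=
  forall p, Xset p -> exists U, nbhs p U /\
    finite_set [set B | F B /\ (B `&` U) !=set0].

Definition polyhedron (P : set point) : Prop :=
  P !=set0 /\
  exists F : set (set point),
    (forall Z, F Z -> is_halfspace Z) /\
    P = Xset `&` \bigcap_(Z in F) Z /\
    locally_finite_family [set H | exists2 Z, F Z & halfspace_of H Z].

Definition thick (P : set point) : Prop := exists p, rel_interior Xset P p.

Definition essential_halfspace (P Z : set point) : Prop :=
  exists H, halfspace_of H Z /\ P `<=` Z /\
    exists p, rel_interior H (P `&` H) p.

Definition essential_hyperplane (P H : set point) : Prop :=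
  exists Z, halfspace_of H Z /\ P `<=` Z /\
    exists p, rel_interior H (P `&` H) p.

Definition partial_tessellation (Tiles : set (set point)) : Prop :=
  (forall T, Tiles T -> polyhedron T /\ thick T) /\
  forall T1 T2, Tiles T1 -> Tiles T2 -> T1 <> T2 ->
    rel_interior Xset T1 `&` rel_interior Xset T2 = set0.

Definition locally_finite_tess (Tiles : set (set point)) : Prop :=
  forall K : set point, compact K -> K `<=` Xset ->
    finite_set [set T | Tiles T /\ (T `&` K) !=set0].

Definition cell (Tiles : set (set point)) (C : set point) : Prop :=
  C !=set0 /\
  (exists F : set (set point), F !=set0 /\ F `<=` Tiles /\
     C = \bigcap_(T in F) T) /\
  forall T, Tiles T -> C `<=` T \/ relint C `&` T = set0.

Definition side (Tiles : set (set point)) (C : set point) : Prop :=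
  cell Tiles C /\ codim C 1.

End Geometry.

(* Main.v *)
Require Import Defs.
From HB Require Import structures.
From mathcomp Require Import all_boot all_order all_algebra.
From mathcomp Require Import all_classical all_reals all_analysis.
From mathcomp Require Import ring lra zify.
Import Order.TTheory GRing.Theory Num.Theory.
Import numFieldNormedType.Exports.
Local Open Scope classical_set_scope.
Local Open Scope ring_scope.
Set Implicit Arguments. Unset Strict Implicit. Unset Printing Implicit Defensive.
Section Basic.
Variables (R : realType) (n : nat).
Local Notation point := 'rV[R]_(n.+1).

Lemma lfunD (a x y : point) : lfun a (x + y) = lfun a x + lfun a y.
Proof. by rewrite /lfun -big_split /=; apply: eq_bigr => i _; rewrite mxE mulrDr. Qed.

Lemma lfunZ (a x : point) (c : R) : lfun a (c *: x) = c * lfun a x.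
Proof. rewrite /lfun mulr_sumr; apply: eq_bigr => i _; rewrite mxE; ring. Qed.

Lemma lfun0 (a : point) : lfun a 0 = 0.
Proof. by rewrite -(scale0r 0) lfunZ mul0r. Qed.

Lemma lfunN (a x : point) : lfun a (- x) = - lfun a x.
Proof. by rewrite -scaleN1r lfunZ mulN1r. Qed.

Lemma lfunB (a x y : point) : lfun a (x - y) = lfun a x - lfun a y.
Proof. by rewrite lfunD lfunN. Qed.

Lemma lfun_scalel (a x : point) (c : R) : lfun (c *: a) x = c * lfun a x.
Proof. rewrite /lfun mulr_sumr; apply: eq_bigr => i _; rewrite mxE; ring. Qed.

Lemma lfun_self_gt0 (a : point) : a != 0 -> 0 < lfun a a.
Proof.
move=> a0; rewrite /lfun lt_neqAle; apply/andP; split; last first.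
  by apply: sumr_ge0 => i _; rewrite -expr2 sqr_ge0.
apply/eqP => /esym /eqP; rewrite psumr_eq0; last by move=> i _; rewrite -expr2 sqr_ge0.
move=> /allP H; move/eqP: a0; apply; apply/matrixP => i j.
rewrite !ord1 mxE; have := H j (mem_index_enum j); rewrite -expr2 sqrf_eq0.
by move/eqP.
Qed.

Lemma coord_le_norm (x : point) (i : 'I_n.+1) : `|x 0 i| <= `|x|.
Proof.
have -> : `|x| = mx_norm x by [].
rewrite mx_normrE.
exact: (le_bigmax _ (fun ij : 'I_1 * 'I_n.+1 => `|x ij.1 ij.2|) (0, i)).
Qed.

Lemma coord_cont (i : 'I_n.+1) : continuous (fun x : point => x 0 i).
Proof.
move=> p; apply/(@cvgrPdist_lt _ _ _ (nbhs p) (nbhs_filter p)) => e e0.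
apply/nbhs_ballP; exists e => //= x; rewrite -ball_normE /= => hx.
have -> : p 0 i - x 0 i = (p - x) 0 i by rewrite !mxE.
apply: le_lt_trans (coord_le_norm (p - x) i) _. exact hx.
Qed.

End Basic.
Section Cont.
Variables (R : realType) (n : nat).
Local Notation point := 'rV[R]_(n.+1).

Lemma nS (p : point) (P Q : set point) : nbhs p P -> (forall x, P x -> Q x) -> nbhs p Q.
Proof. by move=> h1 h; apply: (@filterS _ _ (nbhs_filter p)) h1. Qed.

Lemma nI (p : point) (P Q : set point) : nbhs p P -> nbhs p Q -> nbhs p (P `&` Q).
Proof. exact: (@filterI _ _ (nbhs_filter p)). Qed.

Lemma cont_sum (I : finType) (P : pred I) (F : I -> point -> R) (p : point) :
  (forall i, {for p, continuous (F i)}) ->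
  {for p, continuous (fun x => \sum_(i | P i) F i x)}.
Proof.
move=> h.
apply: (@cvg_big _ _ _ _ _ _ _ _ _ _ (fun i => F i p) (nbhs_filter p)).
  exact: add_continuous.
by move=> i _; exact: h.
Qed.

Lemma cont_mul (F G : point -> R) (p : point) :
  {for p, continuous F} -> {for p, continuous G} ->
  {for p, continuous (fun x => F x * G x)}.
Proof. move=> hF hG; exact: (@cvgM _ _ _ (nbhs_filter p) _ _ _ _ hF hG). Qed.

Lemma cont_sub (F G : point -> R) (p : point) :
  {for p, continuous F} -> {for p, continuous G} ->
  {for p, continuous (fun x => F x - G x)}.
Proof. move=> hF hG; exact: (@cvgB _ _ _ _ (nbhs_filter p) _ _ _ _ hF hG). Qed.

Lemma cont_cst (c : R) (p : point) : {for p, continuous (fun _ : point => c)}.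
Proof. exact: cst_continuous. Qed.

Lemma lfun_cont (a : point) : continuous (lfun a).
Proof.
move=> p; rewrite /lfun.
apply: (cont_sum (F := fun i x => a 0 i * x 0 i)) => i.
apply: (cont_mul (F := fun _ => a 0 i) (G := fun x => x 0 i)); first exact: cont_cst.
exact: coord_cont.
Qed.

End Cont.
Section Geo.
Variables (R : realType) (n : nat).
Local Notation point := 'rV[R]_(n.+1).

Definition fgeo (g : geometry) (x : point) : R :=
  match g with
  | Euclidean => x 0 ord_max
  | Spherical => Num.sqrt (\sum_(i < n.+1) x 0 i ^+ 2)
  | Hyperbolic => Num.sqrt (x 0 ord_max ^+ 2 - \sum_(i < n.+1 | i != ord_max) x 0 i ^+ 2)
  end.

Lemma cont_pos (F : point -> R) (p : point) :
  {for p, continuous F} -> 0 < F p -> nbhs p [set x | 0 < F x].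
Proof.
move=> hF Fp.
have hn := (@cvgrPdist_lt _ _ _ (nbhs p) (nbhs_filter p) F (F p)).1 hF _ Fp.
apply: (nS hn) => x /= h.
have := ler_norm (F p - F x).
move=> h2; have : F p - F x < F p by apply: le_lt_trans h2 h.
by rewrite ltrBlDr ltrDl.
Qed.

Lemma cont_sqrt (F : point -> R) (p : point) :
  {for p, continuous F} -> {for p, continuous (fun x => Num.sqrt (F x))}.
Proof.
move=> hF; apply: (@continuous_comp _ _ _ F (@Num.sqrt R) p hF).
exact: sqrt_continuous.
Qed.

Lemma cont_sq (i : 'I_n.+1) (p : point) : {for p, continuous (fun x : point => x 0 i ^+ 2)}.
Proof.
apply: (cont_mul (F := fun x => x 0 i) (G := fun x => x 0 i)); exact: coord_cont.
Qed.

Lemma geo_not0 g : ~ Xset g (0 : point).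
Proof.
case: g => /=.
- by rewrite mxE => /eqP; rewrite eq_sym oner_eq0.
- rewrite big1 => [/eqP|i _]; first by rewrite eq_sym oner_eq0.
  by rewrite mxE expr0n.
- by rewrite mxE ltxx => -[].
Qed.

Lemma geo_props g (p : point) : Xset g p ->
  [/\ fgeo g p = 1, {for p, continuous (fgeo g)} &
      nbhs p [set x | 0 < fgeo g x /\ Xset g ((fgeo g x)^-1 *: x)]].
Proof.
case: g => /= Xp.
- split => //; first exact: coord_cont.
  have hp : nbhs p [set x : point | 0 < x 0 ord_max].
    by apply: cont_pos; [exact: coord_cont | rewrite Xp ltr01].
  apply: (nS hp) => x /= hx; split => //; rewrite mxE mulVf //; exact: lt0r_neq0.
- have hc : {for p, continuous (fun x : point => \sum_(i < n.+1) x 0 i ^+ 2)}.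
    by apply: (cont_sum (F := fun i x => x 0 i ^+ 2)) => i; exact: cont_sq.
  have hs : {for p, continuous (fun x : point => Num.sqrt (\sum_(i < n.+1) x 0 i ^+ 2))}.
    exact: cont_sqrt.
  split => //; first by rewrite Xp sqrtr1.
  have hp := cont_pos hs ltac:(by rewrite /= Xp sqrtr1 ltr01).
  apply: (nS hp) => x /= hx; split => //.
  set s := \sum_(i < n.+1) x 0 i ^+ 2.
  have s0 : 0 <= s by apply: sumr_ge0 => i _; exact: sqr_ge0.
  rewrite (eq_bigr (fun i => (Num.sqrt s)^-2 * x 0 i ^+ 2)); last first.
    by move=> i _; rewrite mxE exprMn exprVn.
  rewrite -mulr_sumr -/s -exprVn -[in X in _ * X](sqr_sqrtr s0) -exprMn mulVf ?expr1n //.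
  exact: lt0r_neq0.
- case: Xp => Xp1 Xp2.
  set sig := fun x : point => x 0 ord_max ^+ 2 - \sum_(i < n.+1 | i != ord_max) x 0 i ^+ 2.
  have hc : {for p, continuous sig}.
    apply: (cont_sub (F := fun x => x 0 ord_max ^+ 2)); first exact: cont_sq.
    by apply: (cont_sum (F := fun i x => x 0 i ^+ 2)) => i; exact: cont_sq.
  have sp : sig p = 1 by rewrite /sig; lra.
  have hs : {for p, continuous (fun x => Num.sqrt (sig x))} by exact: cont_sqrt.
  split => //; first by rewrite -/(sig p) sp sqrtr1.
  have hp1 := cont_pos hs ltac:(by rewrite /= sp sqrtr1 ltr01).
  have hp2 := cont_pos (@coord_cont R n ord_max p) Xp2.
  apply: (nS (nI hp1 hp2)) => x [/= hx hxn]; split => //.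
  have sx : 0 <= sig x by move: hx; rewrite sqrtr_gt0; exact: ltW.
  have f2 : Num.sqrt (sig x) ^+ 2 = sig x by rewrite sqr_sqrtr.
  rewrite -/(sig x) (eq_bigr (fun i => (Num.sqrt (sig x))^-2 * x 0 i ^+ 2)); last first.
    by move=> i _; rewrite mxE exprMn exprVn.
  rewrite -mulr_sumr mxE exprMn exprVn; split; last first.
    by rewrite mulr_gt0 // invr_gt0.
  rewrite -mulrBr.
  have -> : \sum_(i < n.+1 | i != ord_max) x 0 i ^+ 2 - x 0 ord_max ^+ 2 = - sig x.
    by rewrite /sig; ring.
  rewrite mulrN; congr (- _); rewrite -[X in _ * X]f2 mulVf //; rewrite expf_neq0 //; exact: lt0r_neq0.
Qed.

End Geo.
Section LinAlg.
Variables (R : realType) (n : nat).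
Local Notation point := 'rV[R]_(n.+1).

Lemma dim_full : \dim (fullv : {vspace point}) = n.+1.
Proof. by rewrite dimvf /dim /= mul1n. Qed.

Lemma lfun_span (a : point) (s : seq point) :
  (forall x, x \in s -> lfun a x = 0) -> forall x, x \in << s >>%VS -> lfun a x = 0.
Proof.
elim: s => [|y s IH] hs x.
  by rewrite span_nil memv0 => /eqP ->; rewrite lfun0.
rewrite span_cons => /memv_addP [u /vlineP [k ->] [v hv ->]].
rewrite lfunD lfunZ hs ?mem_head // mulr0 add0r.
by apply: IH hv => z hz; apply: hs; rewrite in_cons hz orbT.
Qed.

Lemma dim_lt_cons (x : point) (s : seq point) : x \notin << s >>%VS ->
  (\dim (<< s >>%VS) < \dim (<< x :: s >>%VS))%N.
Proof.
move=> hx.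
have sub : (<< s >> <= << x :: s >>)%VS by rewrite span_cons addvSr.
rewrite (ltn_leqif (dimv_leqif_sup sub)).
apply/negP => /subvP h; apply/negP: hx; rewrite negbK; apply: h.
by rewrite span_cons; apply: (subvP (addvSl _ _)); exact: memv_line.
Qed.

Lemma decomp (W : {vspace point}) (a : point) :
  (\dim W + 1 = n.+1)%N -> a != 0 -> (forall w, w \in W -> lfun a w = 0) ->
  forall x, exists2 w, w \in W & exists mu, x = w + mu *: a.
Proof.
move=> dW a0 hW x.
have aW : a \notin W by apply/negP => /hW; have := lfun_self_gt0 a0; rewrite lt0r => /andP [/eqP ? _].
have sub : (W <= W + <[a]>)%VS by exact: addvSl.
have lt : (\dim W < \dim (W + <[a]>))%N.
  rewrite (ltn_leqif (dimv_leqif_sup sub)).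
  apply/negP => /subvP h; apply/negP: aW; rewrite negbK; apply: h.
  by apply: (subvP (addvSr _ _)); exact: memv_line.
have full : (W + <[a]>)%VS = fullv.
  apply/eqP; rewrite eqEdim subvf /= dim_full.
  have e : n.+1 = (\dim W).+1 by move: dW; rewrite addn1 => ->.
  by rewrite [X in (X <= _)%N]e.
have : x \in (W + <[a]>)%VS by rewrite full memvf.
move=> /memv_addP [w hw [v /vlineP [k ->] ->]].
by exists w => //; exists k.
Qed.

Lemma vanish_ker (W : {vspace point}) (a : point) :
  (\dim W + 1 = n.+1)%N -> a != 0 -> (forall w, w \in W -> lfun a w = 0) ->
  forall x, lfun a x = 0 -> x \in W.
Proof.
move=> dW a0 hW x hx.
have [w hw [mu ex]] := decomp dW a0 hW x.
move: hx; rewrite ex lfunD lfunZ hW // add0r => /eqP; rewrite mulf_eq0.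
have := lfun_self_gt0 a0; rewrite lt0r => /andP [/negPf -> _]; rewrite orbF.
by move/eqP ->; rewrite scale0r addr0.
Qed.

Lemma vanish_prop (W : {vspace point}) (a b : point) :
  (\dim W + 1 = n.+1)%N -> a != 0 -> (forall w, w \in W -> lfun a w = 0) ->
  (forall w, w \in W -> lfun b w = 0) ->
  exists lam, forall x, lfun b x = lam * lfun a x.
Proof.
move=> dW a0 hW hbW.
exists (lfun b a / lfun a a) => x.
have [w hw [mu ->]] := decomp dW a0 hW x.
rewrite !lfunD !lfunZ (hW w hw) (hbW w hw) !add0r.
have := lfun_self_gt0 a0; rewrite lt0r => /andP [ha _].
by field.
Qed.

End LinAlg.
Section Main.
Variables (R : realType) (g : geometry) (n : nat).
Local Notation point := 'rV[R]_(n.+1).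
Local Notation X := (@Xset R g n).
Local Notation f := (fgeo g).
Definition Nm (x : point) : point := (f x)^-1 *: x.

Lemma nbhs_normP (p : point) (A : set point) :
  nbhs p A <-> exists2 e : R, 0 < e & forall x, `|p - x| < e -> A x.
Proof.
split.
  move/nbhs_ballP => [e /= e0 h]; exists e => // x hx; apply: h.
  by rewrite -ball_normE /=.
move=> [e e0 h]; apply/nbhs_ballP; exists e => //= x; rewrite -ball_normE /=.
exact: h.
Qed.

Lemma ball_open (p y : point) (e : R) : `|p - y| < e ->
  nbhs y [set z | `|p - z| < e].
Proof.
move=> h; apply/nbhs_normP; exists (e - `|p - y|); first by rewrite subr_gt0.
move=> z hz /=; rewrite -(subrK y p) -addrA.
apply: le_lt_trans (ler_normD _ _) _.
by rewrite -ltrBrDl.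
Qed.

Lemma cont_neq0 (F : point -> R) (p : point) :
  {for p, continuous F} -> F p != 0 -> nbhs p [set x | F x != 0].
Proof.
move=> hF Fp.
have hc : {for p, continuous (fun x => F x * F p)}.
  by apply: (cont_mul (F := F) (G := fun _ => F p)) => //; exact: cont_cst.
have h0 : 0 < F p * F p by rewrite -expr2 lt0r sqrf_eq0 Fp sqr_ge0.
apply: (nS (cont_pos hc h0)) => x /= hx.
by apply/eqP => h; move: hx; rewrite h mul0r ltxx.
Qed.

Lemma Xf1 (p : point) : X p -> f p = 1.
Proof. by move=> /geo_props []. Qed.

Lemma N_id (p : point) : X p -> Nm p = p.
Proof. by move=> Xp; rewrite /Nm Xf1 // invr1 scale1r. Qed.

Lemma lfun_Nm (a x : point) : lfun a (Nm x) = (f x)^-1 * lfun a x.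
Proof. by rewrite /Nm lfunZ. Qed.

Lemma NE (p : point) (U : set point) : X p -> nbhs p U ->
  exists2 e : R, 0 < e & forall x, `|p - x| < e -> [/\ 0 < f x, X (Nm x) & U (Nm x)].
Proof.
move=> Xp hU.
have [f1 fc fn] := geo_props Xp.
have hN : {for p, continuous Nm}.
  rewrite /continuous_at /Nm.
  apply: (@cvgZ _ _ _ _ (nbhs_filter p) (fun x => (f x)^-1) id).
    by apply: (@cvgV _ _ _ (nbhs_filter p)) => //; rewrite f1 oner_neq0.
  exact: cvg_id.
have hU' : nbhs (Nm p) U by rewrite N_id.
have := hN U hU' => hp.
have [e e0 he] := (nbhs_normP p _).1 (nI hp fn).
exists e => // x /he [h1 [h2 h3]]; split => //.
Qed.

Lemma PL (p : point) (U : set point) (v : point) : X p -> nbhs p U ->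
  exists2 d : R, 0 < d & forall t, `|t| < d ->
    [/\ 0 < f (p + t *: v), X (Nm (p + t *: v)) & U (Nm (p + t *: v))].
Proof.
move=> Xp hU; have [e e0 he] := NE Xp hU.
have v1 : 0 < `|v| + 1 by rewrite ltr_wpDl.
exists (e / (`|v| + 1)); first by rewrite divr_gt0.
move=> t ht; apply: he.
rewrite opprD addrA subrr add0r normrN mx_normZ.
apply: (@le_lt_trans _ _ (`|t| * (`|v| + 1))).
  by rewrite ler_wpM2l // lerDl.
by rewrite -ltr_pdivlMr.
Qed.

End Main.
Section Poly.
Variables (R : realType) (g : geometry) (n : nat).
Local Notation point := 'rV[R]_(n.+1).
Local Notation X := (@Xset R g n).
Local Notation f := (fgeo g).
Local Notation Nm := (@Nm R g n).

Lemma LL (F : set (set point)) (P : set point) (p : point) :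
  P = X `&` \bigcap_(Z in F) Z ->
  locally_finite_family g [set Hb | exists2 Z, F Z & halfspace_of g Hb Z] ->
  P p ->
  exists2 e : R, 0 < e & forall y, `|p - y| < e -> X y ->
    forall Z Hb a, F Z -> is_hyperplane g Hb -> a != 0 ->
      Hb = X `&` [set x | lfun a x = 0] -> Z = X `&` [set x | 0 <= lfun a x] ->
      lfun a p != 0 -> Z y.
Proof.
move=> hP lf Pp.
have [Xp PZ] : X p /\ forall Z, F Z -> Z p.
  by move: Pp; rewrite hP => -[Xp hb]; split => // Z FZ; apply: hb.
have [U [hU finB]] := lf p Xp.
set Bset := [set B | _] in finB.
have [D hD] := finite_fsetP.1 finB.
set G := \bigcap_(Hb in Bset) [set x : point | Hb p \/ ~ Hb x].
have hG : nbhs p G.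
  rewrite /G hD.
  apply: (@filter_bigI _ _ _ _ _ (nbhs_filter p)) => Hb HbD.
  have : Bset Hb by rewrite hD.
  move=> [[Z0 FZ0 [_ [a' [a'0 [hHb hZ0]]]]] _].
  have [Hbp|nHbp] := pselect (Hb p).
    by apply: (nS (@filterT _ _ (nbhs_filter p))) => x _ /=; left.
  have a'p : lfun a' p != 0.
    by apply/eqP => h; apply: nHbp; rewrite hHb; split.
  apply: (nS (cont_neq0 (@lfun_cont R n a' p) a'p)) => x /= hx; right.
  by rewrite hHb => -[_ /= /eqP]; rewrite (negPf hx).
have [e e0 he] := NE Xp (nI hU hG).
exists e => // y hy Xy Z Hb a FZ hypHb a0 hHb hZ ap.
have Zp := PZ Z FZ.
have ap0 : 0 < lfun a p.
  by move: Zp; rewrite hZ => -[_ /=]; rewrite le0r (negPf ap).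
apply: contrapT => nZy.
have ay : lfun a y < 0.
  rewrite ltNge; apply/negP => h; apply: nZy; rewrite hZ; split => //.
set s := lfun a p / (lfun a p - lfun a y).
have d0 : 0 < lfun a p - lfun a y by rewrite subr_gt0 (lt_trans ay).
have s0 : 0 <= s by rewrite divr_ge0 // ltW.
have s1 : s <= 1 by rewrite ler_pdivrMr // mul1r lerDl oppr_ge0 ltW.
set z := p + s *: (y - p).
have hz : `|p - z| < e.
  rewrite /z opprD addrA subrr add0r normrN mx_normZ ger0_norm //.
  apply: le_lt_trans hy; rewrite -opprB normrN.
  by rewrite -[X in _ <= X]mul1r ler_wpM2r.
have [fz XNz [UNz GNz]] := he z hz.
have az : lfun a z = 0.
  rewrite /z lfunD lfunZ lfunB /s.
  have : lfun a p - lfun a y != 0 by rewrite lt0r_neq0.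
  move=> hd; field => //.
have HbNz : Hb (Nm z) by rewrite hHb; split => //=; rewrite lfun_Nm az mulr0.
have : Bset Hb.
  split; first by exists Z => //; split => //; exists a.
  by exists (Nm z).
move=> /GNz [Hbp|]; last by [].
by move: Hbp; rewrite hHb => -[_ /= /eqP]; rewrite (negPf ap).
Qed.

End Poly.
Section Tools.
Variables (R : realType) (g : geometry) (n : nat).
Local Notation point := 'rV[R]_(n.+1).
Local Notation X := (@Xset R g n).
Local Notation f := (fgeo g).
Local Notation Nm := (@Nm R g n).

Lemma dist_tri (a b c : point) : `|a - c| <= `|a - b| + `|b - c|.
Proof. have -> : a - c = (a - b) + (b - c) by rewrite addrA subrK. exact: ler_normD. Qed.

Lemma lfun_Nm_ge0 (a x : point) : 0 < f x -> (0 <= lfun a (Nm x)) = (0 <= lfun a x).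
Proof. by move=> fx; rewrite lfun_Nm pmulr_rge0 // invr_gt0. Qed.

Lemma lfun_Nm_gt0 (a x : point) : 0 < f x -> (0 < lfun a (Nm x)) = (0 < lfun a x).
Proof. by move=> fx; rewrite lfun_Nm pmulr_rgt0 // invr_gt0. Qed.

Definition Kball (F : set (set point)) (q : point) (e : R) :=
  forall x, `|q - x| < e -> forall Z a, F Z -> Z = X `&` [set y | 0 <= lfun a y] ->
    0 <= lfun a x.

Lemma TL (F : set (set point)) (T : set point) :
  T = X `&` \bigcap_(Z in F) Z -> thick g T ->
  exists q, exists2 e : R, 0 < e & X q /\ Kball F q e.
Proof.
move=> hT [q [Tq hq]].
have Xq : X q by move: Tq; rewrite hT => -[].
have [e e0 he] := NE Xq hq.
exists q, e => //; split => // x hx Z a FZ hZ.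
have [fx XN TN] := he x hx.
have := TN XN; rewrite hT => -[_ /(_ Z FZ)]; rewrite hZ => -[_ /=].
by rewrite lfun_Nm_ge0.
Qed.

Lemma Kball_sub (F : set (set point)) (q q' : point) (e e' : R) :
  Kball F q e -> `|q - q'| + e' <= e -> Kball F q' e'.
Proof.
move=> K h x hx; apply: K; apply: le_lt_trans (dist_tri q q' x) _.
by apply: lt_le_trans h; rewrite ltrD2l.
Qed.

Lemma Kball_strict (F : set (set point)) (q : point) (e : R) Z a :
  0 < e -> Kball F q e -> F Z -> Z = X `&` [set y | 0 <= lfun a y] -> a != 0 ->
  0 < lfun a q.
Proof.
move=> e0 K FZ hZ a0.
have v1 : 0 < `|a| + 1 by rewrite ltr_wpDl.
set s := e / (2 * (`|a| + 1)).
have s0 : 0 < s by rewrite divr_gt0 // mulr_gt0.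
have : 0 <= lfun a (q - s *: a).
  apply: (K _ _ Z a FZ hZ).
  rewrite opprB addrC subrK mx_normZ gtr0_norm //.
  apply: (@le_lt_trans _ _ (s * (`|a| + 1))); first by rewrite ler_pM2l // lerDl.
  have hv : `|a| + 1 != 0 by exact: lt0r_neq0.
  have -> : s * (`|a| + 1) = e / 2 by rewrite /s; field.
  lra.
rewrite lfunB lfunZ subr_ge0 => h.
by apply: lt_le_trans h; rewrite mulr_gt0 // lfun_self_gt0.
Qed.

Lemma TL' (F : set (set point)) (T : set point) (a1 : point) :
  T = X `&` \bigcap_(Z in F) Z -> thick g T -> a1 != 0 ->
  exists q, exists2 e : R, 0 < e & lfun a1 q != 0 /\ Kball F q e.
Proof.
move=> hT th a10.
have [q0 [e0 e00 [Xq0 K]]] := TL hT th.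
have v1 : 0 < `|a1| + 1 by rewrite ltr_wpDl.
set s0 := e0 / (4 * (`|a1| + 1)).
have s00 : 0 < s0 by rewrite divr_gt0 // mulr_gt0.
have aa := lfun_self_gt0 a10.
have [s [hs1 hs2]] : exists s, `|s| = s0 /\ lfun a1 (q0 + s *: a1) != 0.
  have [h|h] := eqVneq (lfun a1 (q0 + s0 *: a1)) 0.
    exists (- s0); split; first by rewrite normrN gtr0_norm.
    move: h; rewrite !lfunD !lfunZ => /eqP; rewrite addr_eq0 => /eqP ->.
    apply/eqP => h; have : 0 < s0 * lfun a1 a1 by rewrite mulr_gt0.
    move: h; rewrite mulNr; lra.
  by exists s0; split => //; rewrite gtr0_norm.
exists (q0 + s *: a1), (e0 / 2); first by rewrite divr_gt0.
split => //; apply: (Kball_sub K).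
rewrite opprD addrA subrr add0r normrN mx_normZ hs1.
have : s0 * `|a1| <= e0 / 4.
  apply: (@le_trans _ _ (s0 * (`|a1| + 1))); first by rewrite ler_pM2l // lerDl.
  have hv : `|a1| + 1 != 0 by exact: lt0r_neq0.
  have -> : s0 * (`|a1| + 1) = e0 / 4 by rewrite /s0; field.
  by [].
lra.
Qed.

End Tools.
Section Hyp.
Variables (R : realType) (g : geometry) (n : nat).
Local Notation point := 'rV[R]_(n.+1).
Local Notation X := (@Xset R g n).
Local Notation f := (fgeo g).
Local Notation Nm := (@Nm R g n).

Lemma Nm_in (W : {vspace point}) (x : point) : x \in W -> Nm x \in W.
Proof. by move=> h; rewrite /Nm memvZ. Qed.

Lemma StepB (H S Z : set point) (W : {vspace point}) (a p : point) :
  H = X `&` [set x | x \in W] -> H p -> nbhs p (fun y => H y -> S y) ->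
  S `<=` Z -> Z = X `&` [set y | 0 <= lfun a y] -> lfun a p = 0 ->
  forall w, w \in W -> lfun a w = 0.
Proof.
move=> hH Hp hS SZ hZ ap w hw.
have [Xp pW] : X p /\ p \in W by move: Hp; rewrite hH.
have [d d0 hd] := PL w Xp hS.
have key : forall t, `|t| < d -> 0 <= t * lfun a w.
  move=> t ht; have [fz XN SN] := hd t ht.
  have : H (Nm (p + t *: w)).
    rewrite hH; split => //=; apply: Nm_in; rewrite memvD // memvZ //.
  move=> /SN /SZ; rewrite hZ => -[_ /=]; rewrite lfun_Nm_ge0 //.
  by rewrite lfunD lfunZ ap add0r.
have d2 : 0 < d / 2 by rewrite divr_gt0.
have h1 := key (d / 2) ltac:(by rewrite gtr0_norm // ltr_pdivrMr // ltr_pMr // ltr1n).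
have h2 := key (- (d / 2)) ltac:(by rewrite normrN gtr0_norm // ltr_pdivrMr // ltr_pMr // ltr1n).
move: h1 h2; rewrite pmulr_rge0 // mulNr oppr_ge0 pmulr_rle0 // => h1 h2.
by apply/eqP; rewrite eq_le h1 h2.
Qed.

Lemma INT (p a : point) (e : R) : X p -> a != 0 -> lfun a p = 0 -> 0 < e ->
  exists y, X y /\ nbhs y [set x | `|p - x| < e /\ 0 < lfun a x].
Proof.
move=> Xp a0 ap e0.
have hb : nbhs p [set x : point | `|p - x| < e] by apply/nbhs_normP; exists e.
have [d d0 hd] := PL a Xp hb.
have d2 : 0 < d / 2 by rewrite divr_gt0.
have [fz XN bN] := hd (d / 2) ltac:(by rewrite gtr0_norm // ltr_pdivrMr // ltr_pMr // ltr1n).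
exists (Nm (p + (d / 2) *: a)); split => //.
have pos : 0 < lfun a (Nm (p + (d / 2) *: a)).
  by rewrite lfun_Nm_gt0 // lfunD lfunZ ap add0r mulr_gt0 // lfun_self_gt0.
exact: (nI (ball_open bN) (cont_pos (@lfun_cont R n a _) pos)).
Qed.

Lemma exists_notin (W : {vspace point}) : (\dim W + 1 = n.+1)%N -> exists v, v \notin W.
Proof.
move=> dW; apply: contrapT => hn.
have : (fullv <= W)%VS.
  apply/subvP => v _; apply: contrapT => hv; apply: hn; exists v; exact/negP.
move/dimvS; rewrite dim_full; lia.
Qed.

Lemma NI (W : {vspace point}) (q : point) : (\dim W + 1 = n.+1)%N -> X q ->
  ~ nbhs q (fun y => X y -> y \in W).
Proof.
move=> dW Xq hq.
have [v vW] := exists_notin dW.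
have qW : q \in W by apply: (nbhs_singleton hq).
have [d d0 hd] := PL v Xq hq.
have d2 : 0 < d / 2 by rewrite divr_gt0.
have [fz XN WN] := hd (d / 2) ltac:(by rewrite gtr0_norm // ltr_pdivrMr // ltr_pMr // ltr1n).
have := WN XN; rewrite /Nm rpredZeq invr_eq0 (negPf (lt0r_neq0 fz)) /=.
rewrite rpredDl // rpredZeq (negPf vW) orbF => /eqP d20.
by move: d2; rewrite d20 ltxx.
Qed.

Lemma gen_uniq (S Y H : set point) : gen_subspace g S Y -> gen_subspace g S H -> Y = H.
Proof.
move=> [sY [SY mY]] [sH [SH mH]].
by apply/seteqP; split; [apply: mY | apply: mH].
Qed.

End Hyp.
Section Local.
Variables (R : realType) (g : geometry) (n : nat).
Local Notation point := 'rV[R]_(n.+1).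
Local Notation X := (@Xset R g n).
Local Notation f := (fgeo g).
Local Notation Nm := (@Nm R g n).

Lemma LC (T S H : set point) (F : set (set point)) (W : {vspace point}) (p : point) :
  (\dim W + 1 = n.+1)%N -> H = X `&` [set x | x \in W] ->
  (forall Z, F Z -> is_halfspace g Z) -> T = X `&` \bigcap_(Z in F) Z ->
  locally_finite_family g [set Hb | exists2 Z, F Z & halfspace_of g Hb Z] ->
  thick g T -> S `<=` T -> S p -> H p -> nbhs p (fun y => H y -> S y) ->
  exists2 e : R, 0 < e &
    (forall y, `|p - y| < e -> X y -> T y) \/
    (exists a, [/\ a != 0, forall w, w \in W -> lfun a w = 0,
       forall y, T y -> 0 <= lfun a y &
       forall y, `|p - y| < e -> X y -> 0 <= lfun a y -> T y]).
Proof.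
move=> dW hH hF hT lf th ST Sp Hp hS.
have [e e0 hL] := LL hT lf (ST p Sp).
exists e => //.
have memT : forall y, X y -> (forall Z, F Z -> Z y) -> T y.
  by move=> y Xy hy; rewrite hT; split.
have TZ : forall y Z, T y -> F Z -> Z y.
  by move=> y Z; rewrite hT => -[_ hy] FZ; apply: hy.
have [[Z0 [Hb0 [a0 [FZ0 [hyp0 [a00 [hHb0 [hZ0 ap0]]]]]]]]|nact] := pselect (exists Z Hb a,
   F Z /\ is_hyperplane g Hb /\ a != 0 /\ Hb = X `&` [set x | lfun a x = 0] /\
       Z = X `&` [set x | 0 <= lfun a x] /\ lfun a p = 0).
- right; exists a0.
  have SZ0 : S `<=` Z0 by move=> x /ST Tx; exact: TZ x Z0 Tx FZ0.
  have van0 := StepB hH Hp hS SZ0 hZ0 ap0.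
  have [q [eq eq0 [_ K]]] := TL hT th.
  split => //.
    by move=> y Ty; have := TZ y Z0 Ty FZ0; rewrite hZ0 => -[].
  move=> y hy Xy ay; apply: memT => // Z FZ.
  have [Hb [hyp [a [a0' [hHb hZ]]]]] := hF Z FZ.
  have [ap|ap] := eqVneq (lfun a p) 0; last exact: (hL y hy Xy Z Hb a).
  have SZ : S `<=` Z by move=> x /ST Tx; exact: TZ x Z Tx FZ.
  have vanA := StepB hH Hp hS SZ hZ ap.
  have [lam hlam] := vanish_prop dW a00 van0 vanA.
  have qa := Kball_strict eq0 K FZ hZ a0'.
  have qa0 := Kball_strict eq0 K FZ0 hZ0 a00.
  have lam0 : 0 < lam by move: qa; rewrite hlam pmulr_lgt0.
  by rewrite hZ; split => //=; rewrite hlam mulr_ge0 // ltW.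
- left => y hy Xy; apply: memT => // Z FZ.
  have [Hb [hyp [a [a0' [hHb hZ]]]]] := hF Z FZ.
  apply: (hL y hy Xy Z Hb a) => //.
  by apply/eqP => ap; apply: nact; exists Z, Hb, a.
Qed.

Definition tile_ok (T : set point) (F : set (set point)) :=
  [/\ forall Z, F Z -> is_halfspace g Z, T = X `&` \bigcap_(Z in F) Z,
      locally_finite_family g [set Hb | exists2 Z, F Z & halfspace_of g Hb Z] &
      thick g T].

Lemma tile_okP (Tiles : set (set point)) T :
  partial_tessellation g Tiles -> Tiles T -> exists F, tile_ok T F.
Proof.
move=> [hT _] /hT [[_ [F [h1 [h2 h3]]]] th].
by exists F; split.
Qed.

Lemma MAIN (Tiles : set (set point)) (T1 T2 H : set point) (W : {vspace point}) (p : point) :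
  partial_tessellation g Tiles -> Tiles T1 -> Tiles T2 -> T1 <> T2 ->
  (\dim W + 1 = n.+1)%N -> H = X `&` [set x | x \in W] ->
  (T1 `&` T2) p -> H p -> nbhs p (fun y => H y -> (T1 `&` T2) y) ->
  exists a1 a2 lam, exists2 e : R, 0 < e &
   a1 != 0 /\ a2 != 0 /\ (forall w, w \in W -> lfun a1 w = 0) /\
   (forall x, lfun a2 x = lam * lfun a1 x) /\ lam < 0 /\
   (forall y, T1 y -> 0 <= lfun a1 y) /\
   (forall y, T2 y -> 0 <= lfun a2 y) /\
   (forall y, `|p - y| < e -> X y -> 0 <= lfun a1 y -> T1 y) /\
   (forall y, `|p - y| < e -> X y -> 0 <= lfun a2 y -> T2 y).
Proof.
move=> tess T1t T2t T12 dW hH Sp Hp hS.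
have [Xp pW] : X p /\ p \in W by move: Hp; rewrite hH.
have [F1 [hF1 hT1 lf1 th1]] := tile_okP tess T1t.
have [F2 [hF2 hT2 lf2 th2]] := tile_okP tess T2t.
have disj : forall y, rel_interior X T1 y -> rel_interior X T2 y -> False.
  move=> y h1 h2; have := tess.2 T1 T2 T1t T2t T12.
  by move/seteqP => [/(_ y (conj h1 h2))].
have [e1 e10 c1] := LC dW hH hF1 hT1 lf1 th1 (fun x (h : (T1 `&` T2) x) => h.1) Sp Hp hS.
have [e2 e20 c2] := LC dW hH hF2 hT2 lf2 th2 (fun x (h : (T1 `&` T2) x) => h.2) Sp Hp hS.
set e := Num.min e1 e2.
have e0 : 0 < e by rewrite lt_min e10 e20.
have he1 : forall y, `|p - y| < e -> `|p - y| < e1 by move=> y; rewrite lt_min => /andP [].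
have he2 : forall y, `|p - y| < e -> `|p - y| < e2 by move=> y; rewrite lt_min => /andP [].
have intr : forall (T : set point) (a : point) y, X y ->
    nbhs y [set x | `|p - x| < e /\ 0 < lfun a x] ->
    (forall x, `|p - x| < e -> X x -> 0 <= lfun a x -> T x) -> rel_interior X T y.
  move=> T a y Xy hy hT; split.
    by have [hy1 hy2] := nbhs_singleton hy; apply: hT => //; exact: ltW.
  by apply: (nS hy) => x [hx1 hx2] Xx; apply: hT => //; exact: ltW.
have ap : forall a, (forall w, w \in W -> lfun a w = 0) -> lfun a p = 0.
  by move=> a /(_ p pW).
case: c1 => [L1|[a1 [a10 van1 T1a1 R1]]]; case: c2 => [L2|[a2 [a20 van2 T2a2 R2]]].
- exfalso; apply: (disj p).
    split; first exact: Sp.1.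
    by apply/nbhs_normP; exists e => // y hy; apply: L1; apply: he1.
  split; first exact: Sp.2.
  by apply/nbhs_normP; exists e => // y hy; apply: L2; apply: he2.
- exfalso; have [y [Xy hy]] := INT Xp a20 (ap a2 van2) e0.
  apply: (disj y).
    by apply: (intr _ a2 y Xy hy) => x hx Xx _; apply: L1 => //; exact: he1.
  by apply: (intr _ a2 y Xy hy) => x hx Xx hx2; apply: R2 => //; exact: he2.
- exfalso; have [y [Xy hy]] := INT Xp a10 (ap a1 van1) e0.
  apply: (disj y).
    by apply: (intr _ a1 y Xy hy) => x hx Xx hx2; apply: R1 => //; exact: he1.
  by apply: (intr _ a1 y Xy hy) => x hx Xx _; apply: L2 => //; exact: he2.
have [lam hlam] := vanish_prop dW a10 van1 van2.
have [lam0|lam0|lam0] := ltgtP lam 0.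
- exists a1, a2, lam, e => //; do 8 (split => //).
    by move=> y hy; apply: R1; apply: he1.
  by move=> y hy; apply: R2; apply: he2.
- exfalso; have [y [Xy hy]] := INT Xp a10 (ap a1 van1) e0.
  apply: (disj y).
    by apply: (intr _ a1 y Xy hy) => x hx Xx hx2; apply: R1 => //; exact: he1.
  apply: (intr _ a1 y Xy hy) => x hx Xx hx2.
  by apply: R2 => //; [exact: he2 | rewrite hlam mulr_ge0 // ltW].
- exfalso; have := lfun_self_gt0 a20; rewrite hlam lam0 mul0r ltxx.
  by [].
Qed.

End Local.
Section StepA.
Variables (R : realType) (g : geometry) (n : nat).
Local Notation point := 'rV[R]_(n.+1).
Local Notation X := (@Xset R g n).
Local Notation f := (fgeo g).
Local Notation Nm := (@Nm R g n).
Local Notation tok := (@tile_ok R g n).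

Lemma span_exists (Sset : set point) : exists s : seq point,
  (forall x, x \in s -> Sset x) /\ (forall x, Sset x -> x \in << s >>%VS).
Proof.
suff: forall m (s : seq point), (n.+1 - \dim (<< s >>%VS) <= m)%N ->
    (forall x, x \in s -> Sset x) -> exists s' : seq point,
    (forall x, x \in s' -> Sset x) /\ (forall x, Sset x -> x \in << s' >>%VS).
  by move=> h; apply: (h n.+1 [::]) => //; exact: leq_subr.
elim=> [|m IH] s hm hs.
  exists s; split => // x _.
  have e : (<< s >>%VS == fullv).
    rewrite eqEdim subvf dim_full /=; lia.
  by rewrite (eqP e) memvf.
have [h|h] := pselect (forall x, Sset x -> x \in << s >>%VS); first by exists s.
have [x [Sx xs]] : exists x, Sset x /\ x \notin << s >>%VS.
  apply: contrapT => hn; apply: h => x Sx; apply: contrapT => hx; apply: hn.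
  by exists x; split => //; exact/negP.
apply: (IH (x :: s)).
  have := dim_lt_cons xs; lia.
by move=> y; rewrite in_cons => /orP [/eqP ->|/hs].
Qed.

Lemma sub_span_dim (s : seq point) : (\dim (<< s >>%VS) + (n.+1 - \dim (<< s >>%VS)) = n.+1)%N.
Proof. have := dimvS (subvf << s >>%VS); rewrite dim_full; lia. Qed.

Lemma tile_sub (T : set point) F : tok T F -> forall y, T y -> X y.
Proof. by move=> [_ -> _ _] y []. Qed.

Lemma tile_Z (T : set point) F : tok T F -> forall y Z, T y -> F Z -> Z y.
Proof. by move=> [_ -> _ _] y Z [_ h] FZ; apply: h. Qed.

Lemma tile_mem (T : set point) F : tok T F -> forall y, X y -> (forall Z, F Z -> Z y) -> T y.
Proof. by move=> [_ -> _ _] y Xy h; split. Qed.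

Lemma tile_hs (T : set point) F Z : tok T F -> F Z -> is_halfspace g Z.
Proof. by move=> [h _ _ _]; apply: h. Qed.

Lemma StepA (T1 T2 H : set point) F1 F2 (W : {vspace point}) (x0 : point) :
  (\dim W + 1 = n.+1)%N -> H = X `&` [set x | x \in W] ->
  tok T1 F1 -> tok T2 F2 -> gen_subspace g (T1 `&` T2) H -> (T1 `&` T2) x0 ->
  exists p, (T1 `&` T2) p /\ nbhs p (fun y => H y -> (T1 `&` T2) y).
Proof.
move=> dW hH ok1 ok2 gen Sx0.
set S := T1 `&` T2.
have SX : forall y, S y -> X y by move=> y [/(tile_sub ok1)].
have Xx0 := SX x0 Sx0.
have [s [sS Ss]] := span_exists S.
have SH : S `<=` H := gen.2.1.
have WS : forall w, w \in W -> w \in << s >>%VS.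
  have Hsub : H `<=` X `&` [set x | x \in << s >>%VS].
    apply: gen.2.2; last by move=> y Sy; split; [exact: SX | exact: Ss].
    exists (n.+1 - \dim (<< s >>%VS))%N, (<< s >>%VS); split; first exact: sub_span_dim.
    by split => //; exists x0; split; [exact: Xx0 | exact: Ss].
  move=> w hw.
  have x0W : x0 \in W by move: (SH x0 Sx0); rewrite hH => -[].
  have [d d0 hd] := PL w Xx0 (@filterT _ _ (nbhs_filter x0)).
  have d2 : 0 < d / 2 by rewrite divr_gt0.
  have [fz XN _] := hd (d / 2) ltac:(by rewrite gtr0_norm // ltr_pdivrMr // ltr_pMr // ltr1n).
  have : H (Nm (x0 + (d / 2) *: w)).
    by rewrite hH; split => //=; apply: Nm_in; rewrite memvD // memvZ.
  move/Hsub => -[_ /=]; rewrite /Nm rpredZeq invr_eq0 (negPf (lt0r_neq0 fz)) /=.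
  rewrite rpredDl; last exact: Ss.
  by rewrite rpredZeq (negPf (lt0r_neq0 d2)).
set sig := \sum_(x <- s) x.
have [d d0 hd] := PL sig Xx0 (@filterT _ _ (nbhs_filter x0)).
have d2 : 0 < d / 2 by rewrite divr_gt0.
have [fu Xp _] := hd (d / 2) ltac:(by rewrite gtr0_norm // ltr_pdivrMr // ltr_pMr // ltr1n).
set u := x0 + (d / 2) *: sig.
set p := Nm u.
have lu : forall a, lfun a u = lfun a x0 + d / 2 * \sum_(x <- s) lfun a x.
  move=> a; rewrite /u lfunD lfunZ; congr (_ + _ * _).
  by rewrite /sig (big_morph (lfun a) (lfunD a) (lfun0 a)).
have claim : forall T F, tok T F -> S `<=` T ->
    T p /\ (forall Z a, F Z -> Z = X `&` [set y | 0 <= lfun a y] -> lfun a p = 0 ->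
              forall w, w \in W -> lfun a w = 0).
  move=> T F ok ST.
  have nonneg : forall Z a, F Z -> Z = X `&` [set y | 0 <= lfun a y] ->
      0 <= lfun a x0 /\ forall x, x \in s -> 0 <= lfun a x.
    move=> Z a FZ hZ; split.
      by have := tile_Z ok (ST _ Sx0) FZ; rewrite hZ => -[].
    by move=> x /sS /ST Tx; have := tile_Z ok Tx FZ; rewrite hZ => -[].
  split.
    apply: (tile_mem ok) => // Z FZ.
    have [Hb [_ [a [_ [_ hZ]]]]] := tile_hs ok FZ.
    have [h1 h2] := nonneg Z a FZ hZ.
    have hs0 : 0 <= \sum_(x <- s) lfun a x.
      by rewrite big_seq; apply: sumr_ge0 => x; exact: h2.
    rewrite hZ; split => //=; rewrite lfun_Nm_ge0 // lu addr_ge0 //.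
    by apply: mulr_ge0 => //; exact: ltW.
  move=> Z a FZ hZ ap.
  have [h1 h2] := nonneg Z a FZ hZ.
  have hsum0 : 0 <= \sum_(x <- s) lfun a x by rewrite big_seq; apply: sumr_ge0 => x; exact: h2.
  have au : lfun a u = 0 by move: ap; rewrite lfun_Nm => /eqP; rewrite mulf_eq0 invr_eq0 (negPf (lt0r_neq0 fu)) /= => /eqP.
  have hs0 : \sum_(x <- s) lfun a x = 0.
    move: au; rewrite lu => h; apply/eqP; rewrite eq_le hsum0 andbT.
    have : d / 2 * \sum_(x <- s) lfun a x <= 0 by move: h1; lra.
    by rewrite pmulr_rle0.
  have van : forall x, x \in s -> lfun a x = 0.
    move: hs0 => /eqP; rewrite big_seq psumr_eq0; last by move=> x; exact: h2.
    by move=> /allP h x xs; move: (h x xs); rewrite xs /= => /eqP.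
  by move=> w /WS; apply: lfun_span.
have [T1p van1] := claim T1 F1 ok1 (fun y (h : S y) => h.1).
have [T2p van2] := claim T2 F2 ok2 (fun y (h : S y) => h.2).
exists p; split; first by split.
have loc : forall T F, tok T F -> T p ->
    (forall Z a, F Z -> Z = X `&` [set y | 0 <= lfun a y] -> lfun a p = 0 ->
              forall w, w \in W -> lfun a w = 0) ->
    nbhs p (fun y => H y -> T y).
  move=> T F ok Tp vanT.
  have [_ hT lf _] := ok.
  have [e e0 hL] := LL hT lf Tp.
  apply/nbhs_normP; exists e => // y hy Hy.
  have [Xy yW] : X y /\ y \in W by move: Hy; rewrite hH.
  apply: (tile_mem ok) => // Z FZ.
  have [Hb [hyp [a [a0 [hHb hZ]]]]] := tile_hs ok FZ.
  have [ap|ap] := eqVneq (lfun a p) 0; last exact: (hL y hy Xy Z Hb a).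
  by rewrite hZ; split => //=; rewrite (vanT Z a FZ hZ ap y yW).
have := nI (loc T1 F1 ok1 T1p van1) (loc T2 F2 ok2 T2p van2).
by move=> h; apply: (nS h) => y [h1 h2] Hy; split; [exact: h1 | exact: h2].
Qed.

End StepA.
Section Final.
Variables (R : realType) (g : geometry) (n : nat).
Local Notation point := 'rV[R]_(n.+1).
Local Notation X := (@Xset R g n).
Local Notation f := (fgeo g).
Local Notation Nm := (@Nm R g n).
Local Notation tok := (@tile_ok R g n).

Lemma exists_notin' (U : {vspace point}) : (\dim U < n.+1)%N -> exists v, v \notin U.
Proof.
move=> dU; apply: contrapT => hn.
have : (fullv <= U)%VS.
  apply/subvP => v _; apply: contrapT => hv; apply: hn; exists v; exact/negP.
move/dimvS; rewrite dim_full; lia.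
Qed.

Lemma NEm (S H : set point) (W : {vspace point}) (h : point) :
  (\dim W + 1 = n.+1)%N -> H = X `&` [set x | x \in W] -> H h ->
  gen_subspace g S H -> exists x0, S x0.
Proof.
move=> dW hH Hh gen; apply: contrapT => nS.
have [Xh hW] : X h /\ h \in W by move: Hh; rewrite hH.
have h0 : h != 0 by apply/eqP => h0; apply: (@geo_not0 R n g); rewrite -h0.
have [n0|n0] := eqVneq n 0.
  have : (\dim W == 0)%N by apply/eqP; lia.
  by rewrite dimv_eq0 => /eqP W0; move: hW; rewrite W0 memv0 (negPf h0).
have [v vh] : exists v, v \notin <[h]>%VS.
  apply: exists_notin'; rewrite dim_vline h0; move/eqP: n0; lia.
have [d d0 hd] := PL v Xh (@filterT _ _ (nbhs_filter h)).
have d2 : 0 < d / 2 by rewrite divr_gt0.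
have [fz Xq _] := hd (d / 2) ltac:(by rewrite gtr0_norm // ltr_pdivrMr // ltr_pMr // ltr1n).
set q := Nm (h + (d / 2) *: v) in Xq.
have sub : H `<=` X `&` [set x | x \in <[q]>%VS].
  apply: gen.2.2; last by move=> y Sy; exfalso; apply: nS; exists y.
  exists (n.+1 - \dim <[q]>)%N, <[q]>%VS; split.
    by have := dimvS (subvf <[q]>%VS); rewrite dim_full => h1; rewrite subnKC.
  by split => //; exists q; split => //=; exact: memv_line.
have := sub h Hh => -[_ /= /vlineP [k hk]].
set c := k * (f (h + (d / 2) *: v))^-1.
have hc : h = c *: h + (c * (d / 2)) *: v.
  by rewrite {1}hk /q /Nm scalerA scalerDr scalerA.
have [c0|c0] := eqVneq c 0.
  by move: hc; rewrite c0 scale0r mul0r scale0r addr0 => /eqP; rewrite (negPf h0).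
have cd : c * (d / 2) != 0 by rewrite mulf_neq0 // lt0r_neq0.
have : (c * (d / 2)) *: v \in <[h]>%VS.
  have -> : (c * (d / 2)) *: v = (1 - c) *: h.
    by rewrite scalerBl scale1r {1}hc addrC addKr.
  by rewrite memvZ // memv_line.
by rewrite rpredZeq (negPf cd) (negPf vh).
Qed.

End Final.
Section Third.
Variables (R : realType) (g : geometry) (n : nat).
Local Notation point := 'rV[R]_(n.+1).
Local Notation X := (@Xset R g n).
Local Notation f := (fgeo g).
Local Notation Nm := (@Nm R g n).
Local Notation tok := (@tile_ok R g n).

Lemma third (Tiles : set (set point)) (T1 T2 H T : set point) (W : {vspace point}) (p : point) :
  partial_tessellation g Tiles -> Tiles T1 -> Tiles T2 -> T1 <> T2 ->
  (\dim W + 1 = n.+1)%N -> H = X `&` [set x | x \in W] ->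
  (T1 `&` T2) p -> H p -> nbhs p (fun y => H y -> (T1 `&` T2) y) ->
  Tiles T -> T <> T1 -> T <> T2 -> T p -> False.
Proof.
move=> tess T1t T2t T12 dW hH Sp Hp hS Tt nT1 nT2 Tp.
have [a1 [a2 [lam [e e0 [a10 [a20 [van1 [hlam [lam0 [T1a [T2a [R1 R2]]]]]]]]]]]] :=
  MAIN tess T1t T2t T12 dW hH Sp Hp hS.
have [Xp pW] : X p /\ p \in W by move: Hp; rewrite hH.
have a1p : lfun a1 p = 0 by apply: van1.
have [F ok] := tile_okP tess Tt.
have [hF hT lf th] := ok.
have [q [eq eq0 [a1q K]]] := TL' hT th a10.
have hb : nbhs p [set x : point | `|p - x| < e] by apply/nbhs_normP; exists e.
have [d d0 hd] := PL (q - p) Xp hb.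
set t := Num.min (d / 2) (1 / 2).
have t0 : 0 < t by rewrite lt_min !divr_gt0.
have tl : t <= d / 2 by rewrite /t ge_min lexx.
have tr : t <= 1 / 2 by rewrite /t ge_min lexx orbT.
have td : `|t| < d.
  rewrite gtr0_norm //; apply: (le_lt_trans tl).
  by rewrite ltr_pdivrMr // ltr_pMr // ltr1n.
have t1 : t <= 1 by apply: (le_trans tr); rewrite ler_pdivrMr // mul1r ler1n.
have [fz Xw bw] := hd t td.
set z := p + t *: (q - p) in fz Xw bw.
set w := Nm z in Xw bw.
have az : lfun a1 z = t * lfun a1 q by rewrite /z lfunD lfunZ lfunB a1p subr0 add0r.
have fz0 : f z != 0 by exact: lt0r_neq0.
have t00 : t != 0 by exact: lt0r_neq0.
have intT : rel_interior X T w.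
  suff hn : nbhs w (fun y => X y -> T y) by split => //; exact: (nbhs_singleton hn).
  apply/nbhs_normP; exists (t * eq / f z); first by rewrite !mulr_gt0 // invr_gt0.
  move=> y hy Xy; apply: (tile_mem ok) => // Z FZ.
  have [Hb [_ [a [a0 [_ hZ]]]]] := hF Z FZ.
  set x := f z *: y.
  set u := p + t^-1 *: (x - p).
  have hq : `|q - u| < eq.
    have -> : q - u = t^-1 *: (z - x).
      by apply/matrixP => i j; rewrite /u /z !mxE; field.
    have -> : z - x = f z *: (w - y).
      by apply/matrixP => i j; rewrite /x /w /Nm /z !mxE; field.
    rewrite !mx_normZ !gtr0_norm ?invr_gt0 //.
    move: hy; rewrite ltr_pdivlMr // => hy.
    by rewrite ltr_pdivrMl // mulrC.
  have au := K u hq Z a FZ hZ.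
  have ap : 0 <= lfun a p by have := tile_Z ok Tp FZ; rewrite hZ => -[].
  have ax : lfun a x = lfun a p + t * (lfun a u - lfun a p).
    by rewrite /u (lfunD a p) (lfunZ a (x - p)) (lfunB a x p); field.
  have ay : lfun a y = (f z)^-1 * lfun a x by rewrite /x lfunZ mulrA mulVf // mul1r.
  rewrite hZ; split => //=; rewrite ay; apply: mulr_ge0; first by rewrite invr_ge0 ltW.
  have -> : lfun a x = (1 - t) * lfun a p + t * lfun a u by rewrite ax; ring.
  apply: addr_ge0; apply: mulr_ge0 => //; [by rewrite subr_ge0 | exact: ltW].
have disj : forall T', Tiles T' -> T <> T' -> rel_interior X T' w -> False.
  move=> T' T't nTT' h'; have := tess.2 T T' Tt T't nTT'.
  by move/seteqP => [/(_ w (conj intT h'))].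
have aw : lfun a1 w != 0.
  by rewrite lfun_Nm az mulf_neq0 // ?invr_eq0 // mulf_neq0.
have [aw0|aw0|aw0] := ltgtP (lfun a1 w) 0; last by move: aw; rewrite aw0 eqxx.
- have a2w : 0 < lfun a2 w by rewrite hlam nmulr_rgt0.
  apply: (disj T2 T2t nT2); split.
    by apply: R2 => //; exact: ltW.
  apply: (nS (nI (ball_open bw) (cont_pos (@lfun_cont R n a2 w) a2w))).
  by move=> y [hy1 hy2] Xy; apply: R2 => //; exact: ltW.
- apply: (disj T1 T1t nT1); split.
    by apply: R1 => //; exact: ltW.
  apply: (nS (nI (ball_open bw) (cont_pos (@lfun_cont R n a1 w) aw0))).
  by move=> y [hy1 hy2] Xy; apply: R1 => //; exact: ltW.
Qed.

End Third.
Lemma HS (R : realType) (g : geometry) (n : nat) (H : set 'rV[R]_(n.+1))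
  (W : {vspace 'rV[R]_(n.+1)}) (a : 'rV[R]_(n.+1)) :
  is_hyperplane g H -> (\dim W + 1 = n.+1)%N -> H = @Xset R g n `&` [set x | x \in W] ->
  a != 0 -> (forall w, w \in W -> lfun a w = 0) ->
  halfspace_of g H (@Xset R g n `&` [set y | 0 <= lfun a y]).
Proof.
move=> hyp dW hH a0 van; split => //; exists a; split => //; split => //.
rewrite hH; apply/seteqP; split => y [Xy /= hy]; split => //=.
  exact: van.
exact: (vanish_ker dW a0 van).
Qed.

Theorem lemma4p3 (R : realType) (g : geometry) (n : nat)
    (Tiles : set (set 'rV[R]_(n.+1))) (T1 T2 : set 'rV[R]_(n.+1))
    (H : set 'rV[R]_(n.+1)) :
  partial_tessellation g Tiles -> locally_finite_tess g Tiles ->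
  Tiles T1 -> Tiles T2 ->
  codim g (T1 `&` T2) 1 ->
  gen_subspace g (T1 `&` T2) H ->
  [/\ essential_hyperplane g T1 H /\ essential_hyperplane g T2 H,
      (exists Z1 Z2, [/\ halfspace_of g H Z1, halfspace_of g H Z2, Z1 <> Z2,
                         T1 `<=` Z1 & T2 `<=` Z2]),
      (forall T, Tiles T -> T <> T1 -> T <> T2 ->
                 relint g (T1 `&` T2) `&` T = set0)
    & side g Tiles (T1 `&` T2)].
Proof.
move=> tess _ T1t T2t cod genH.
have [Y [genY cY]] := cod.
have YH := gen_uniq genY genH; subst Y.
have [W [dW [hH [h Hh]]]] := cY.
have SH : T1 `&` T2 `<=` H := genH.2.1.
have [x0 Sx0] := NEm dW hH Hh genH.
have [F1 ok1] := tile_okP tess T1t.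
have [F2 ok2] := tile_okP tess T2t.
have T12 : T1 <> T2.
  move=> e; have [_ _ _ [q [T1q hq]]] := ok1.
  have Xq : @Xset R g n q := tile_sub ok1 T1q.
  apply: (NI dW Xq); apply: (nS hq) => y hy Xy.
  have : H y by apply: SH; split; [exact: hy | rewrite -e; exact: hy].
  by rewrite hH => -[].
have [p [Sp hp]] := StepA dW hH ok1 ok2 genH Sx0.
have Hp := SH p Sp.
have [Xp pW] : @Xset R g n p /\ p \in W by move: Hp; rewrite hH.
have [a1 [a2 [lam [e e0 [a10 [a20 [van1 [hlam [lam0 [T1a [T2a [R1 R2]]]]]]]]]]]] :=
  MAIN tess T1t T2t T12 dW hH Sp Hp hp.
have van2 : forall w, w \in W -> lfun a2 w = 0 by move=> w hw; rewrite hlam van1 // mulr0.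
have hs1 := HS cY dW hH a10 van1.
have hs2 := HS cY dW hH a20 van2.
have T1Z : T1 `<=` @Xset R g n `&` [set y | 0 <= lfun a1 y].
  by move=> y Ty; split; [exact: (tile_sub ok1 Ty) | exact: T1a].
have T2Z : T2 `<=` @Xset R g n `&` [set y | 0 <= lfun a2 y].
  by move=> y Ty; split; [exact: (tile_sub ok2 Ty) | exact: T2a].
have thirdP : forall T, Tiles T -> T <> T1 -> T <> T2 ->
    relint g (T1 `&` T2) `&` T = set0.
  move=> T Tt n1 n2; apply/seteqP; split => // y [[Y' [genY' [Sy hy]]] Ty].
  have := gen_uniq genY' genH => YH; subst Y'.
  exact: (third tess T1t T2t T12 dW hH Sy (SH y Sy) hy Tt n1 n2 Ty).
split.
- split.
    exists (@Xset R g n `&` [set y | 0 <= lfun a1 y]); split => //; split => //.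
    exists p; split; first by split => //; exact: Sp.1.
    by apply: (nS hp) => y hy Hy; split => //; exact: (hy Hy).1.
  exists (@Xset R g n `&` [set y | 0 <= lfun a2 y]); split => //; split => //.
  exists p; split; first by split => //; exact: Sp.2.
  by apply: (nS hp) => y hy Hy; split => //; exact: (hy Hy).2.
- exists (@Xset R g n `&` [set y | 0 <= lfun a1 y]), (@Xset R g n `&` [set y | 0 <= lfun a2 y]).
  split => //.
  have [y [Xy hy]] := INT Xp a10 (van1 p pW) e0.
  have [_ ay] := nbhs_singleton hy.
  move=> eqZ; have : (@Xset R g n `&` [set y | 0 <= lfun a1 y]) y by split => //; exact: ltW.
  rewrite eqZ => -[_ /=]; rewrite hlam.
  by rewrite nmulr_rge0 // leNgt ay.
- exact: thirdP.
- split => //; split; first by exists x0.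
  split.
    exists [set T | T = T1 \/ T = T2]; split; first by exists T1; left.
    split; first by move=> T [->|->].
    apply/seteqP; split.
      by move=> y [h1 h2] T [->|->].
    move=> y hy; split; [apply: hy; left | apply: hy; right]; done.
  move=> T Tt.
  have [->|n1] := pselect (T = T1); first by left => y [].
  have [->|n2] := pselect (T = T2); first by left => y [].
  by right; apply: thirdP.
Qed.
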